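(* Let $n\ge 1$, let $x_1,\dots,x_n$ be distinct integers each greater than $1$, and let $D=\{1,0,x_1,\dots,x_n\}$. If $(T,s)$ is an optimal signed tree realizing $D$, then there is exactly one edge $e$ of $T$ with $s(e)=-$.
   Context: A signed tree is a pair $(T,s)$ where $T$ is a finite tree and $s:E(T)\to\{+,-\}$. The signed degree $sdeg(v)$ of a vertex is the number of incident positive edges minus the number of incident negative edges. $(T,s)$ realizes $D$ if $D=\{sdeg(v):v\in V(T)\}$. $\sigma(D)=\min\{|V(T)|: \text{some signed tree }(T,s)\text{ realizes }D\}$, and a signed tree $(T,s)$ realizing $D$ is optimal if $|V(T)|=\sigma(D)$. *)

(* Defs.v *)
From mathcomp Require Import all_boot all_order all_algebra.
Set Implicit Arguments. Unset Strict Implicit. Unset Printing Implicit Defensive.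
Import GRing.Theory Num.Theory.

Definition simple_graph (V : finType) (e : rel V) : Prop :=
  symmetric e /\ irreflexive e.

Definition is_tree (V : finType) (e : rel V) : Prop :=
  [/\ simple_graph e,
      0 < #|V|,
      (forall x y : V, connect e x y) &
      (forall c : seq V, 3 <= size c -> uniq c -> ~~ cycle e c)]%N.

(* A sign function: an edge {u,v} (as the 2-element set [set u; v]) is
   positive iff s [set u; v] = true. *)
Definition sdeg (V : finType) (e : rel V) (s : {set V} -> bool) (v : V) : int :=
  (#|[set w | e v w && s [set v; w]]|%:Z - #|[set w | e v w && ~~ s [set v; w]]|%:Z)%R.

Definition realizes (V : finType) (e : rel V) (s : {set V} -> bool)
  (D : int -> Prop) : Prop :=
  forall d : int, D d <-> exists v : V, sdeg e s v = d.

Definition optimal_realization (V : finType) (e : rel V) (s : {set V} -> bool)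
  (D : int -> Prop) : Prop :=
  [/\ is_tree e, realizes e s D &
      forall (V' : finType) (e' : rel V') (s' : {set V'} -> bool),
        is_tree e' -> realizes e' s' D -> (#|V| <= #|V'|)%N].

Definition neg_edges (V : finType) (e : rel V) (s : {set V} -> bool) : {set {set V}} :=
  [set E : {set V} | [exists u : V, exists v : V, [&& e u v, E == [set u; v] & ~~ s E]]].

(* Main.v *)
Require Import Defs.
From mathcomp Require Import all_boot all_order all_algebra.
From mathcomp Require Import zify.
Set Implicit Arguments. Unset Strict Implicit. Unset Printing Implicit Defensive.
Import GRing.Theory Num.Theory.

Section Acyclic.
Variables (V : finType) (e : rel V).
Hypotheses (esym : symmetric e) (eirr : irreflexive e)
  (eacyc : forall c : seq V, (3 <= size c)%N -> uniq c -> ~~ cycle e c).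

Lemma exists_leaf (A : {set V}) : A != set0 ->
  exists2 l, l \in A & (#|[set w in A | e l w]| <= 1)%N.
Proof.
move=> /set0Pn [a0 Aa0].
case: (boolP [exists l in A, #|[set w in A | e l w]| <= 1]) => [/exists_inP [l Al Hl]|].
  by exists l.
rewrite negb_exists_in => /forall_inP H.
have claim : forall k, exists x p, [/\ size p = k, uniq (x :: p),
   all (fun y => y \in A) (x :: p) & path e x p].
  elim=> [|k [x [p [Hs Hu Ha Hp]]]].
    by exists a0, [::]; split => //=; rewrite Aa0.
  have HA : x \in A by move: Ha => /= /andP[].
  have H2 := H x HA; rewrite -ltnNge in H2.
  set S := [set w in A | e x w] in H2.
  have [w Hw Hwy] : exists2 w, w \in S & w != head x p.
    case: (pickP [pred w | (w \in S) && (w != head x p)]) => [w /andP[] | Hn].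
      by exists w.
    have : S \subset [set head x p].
      apply/subsetP => w wS; have := Hn w; rewrite /= wS /= => /negbFE/eqP->.
      by rewrite set11.
    by move/subset_leq_card; rewrite cards1 leqNgt H2.
  move: Hw; rewrite inE => /andP[wA exw].
  case: (boolP (w \in x :: p)) => wIn.
    have wx : w != x by apply/eqP => wx; move: exw; rewrite wx eirr.
    move: wIn; rewrite inE (negbTE wx) /=.
    case: p Hs Hu Ha Hp Hwy => [//|y p'] Hs Hu Ha Hp /= Hwy.
    rewrite inE (negbTE Hwy) /= => wp'; move: Hu Hp; case/splitPr: wp' => p1 p2 Hu Hp.
    exfalso; apply: (negP (eacyc (c := x :: y :: rcons p1 w) _ _)).
    - by rewrite /= size_rcons.
    - by move: Hu; rewrite -cat_rcons -[x :: y :: _]/((x :: y :: rcons p1 w) ++ p2) cat_uniq => /and3P[].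
    - rewrite /cycle rcons_path.
      have -> : last x (y :: rcons p1 w) = w by rewrite /= last_rcons.
      rewrite esym exw andbT.
      by move: Hp; rewrite -cat_rcons -[y :: _]/((y :: rcons p1 w) ++ p2) cat_path => /andP[].
  exists w, (x :: p); split => //=.
  - by rewrite Hs.
  - by rewrite wIn.
  - by rewrite wA.
  - by rewrite esym exw.
have [x [p [Hs Hu Ha _]]] := claim #|A|.
have sub : {subset x :: p <= enum A} by move=> y /(allP Ha); rewrite mem_enum.
by have := uniq_leq_size Hu sub; rewrite /= Hs -cardE ltnn.
Qed.

Lemma deg_sum (A : {set V}) : A != set0 ->
  (\sum_(v in A) #|[set w in A | e v w]| + 2 <= 2 * #|A|)%N.
Proof.
move: {2}#|A| (erefl #|A|) => k; elim: k A => [|k IH] A Ak A0.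
  by move: A0; rewrite -card_gt0 Ak.
have [l lA Hl] := exists_leaf A0.
set A' := A :\ l.
have cA' : #|A'| = k by move: Ak; rewrite (cardsD1 l A) lA => [[]].
have Hdeg : forall v, #|[set w in A | e v w]| = (e v l : nat) + #|[set w in A' | e v w]|.
  move=> v; rewrite (cardsD1 l); congr (_ + _); first by rewrite inE lA.
  by apply: eq_card => w; rewrite !inE andbA.
rewrite (bigD1 l lA) /=.
have -> : (\sum_(v in A | v != l) #|[set w in A | e v w]| =
   \sum_(v in A') (e v l : nat) + \sum_(v in A') #|[set w in A' | e v w]|)%N.
  rewrite -big_split /=; apply: eq_big => [v | v _]; first by rewrite !inE andbC.
  exact: Hdeg.
have Hs : (\sum_(v in A') (e v l : nat) <= 1)%N.
  apply: leq_trans Hl.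
  have -> : (\sum_(v in A') (e v l : nat) = \sum_(v in [set v in A' | e v l]) 1)%N.
    rewrite [RHS](eq_bigl (fun v => (v \in A') && e v l)); last by move=> v; rewrite inE.
    by rewrite big_mkcondr; apply: eq_bigr => v _; case: (e v l).
  rewrite sum1_card; apply: subset_leq_card; apply/subsetP => v.
  by rewrite !inE esym => /andP[/andP[_ ->] ->].
have Hll := Hdeg l; rewrite eirr add0n in Hll.
case: (eqVneq A' set0) => [A'0|A'n0].
  move: Hll cA'; rewrite A'0 => Hll ck.
  rewrite !big_set0 Hll Ak -ck cards0; have -> : [set w in set0 | e l w] = set0 :> {set V}.
    by apply/setP => w; rewrite !inE.
  by rewrite cards0.
have := IH A' cA' A'n0.
rewrite Ak; lia.
Qed.

End Acyclic.

Lemma seq_max (T : eqType) (f : T -> nat) (c : seq T) : c != [::] ->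
  exists2 m, m \in c & forall y, y \in c -> (f y <= f m)%N.
Proof.
elim: c => // a c IH _.
case: (eqVneq c [::]) => [->|cn].
  by exists a; rewrite ?mem_seq1 // => y; rewrite mem_seq1 => /eqP->.
have [m mc H] := IH cn.
case: (leqP (f a) (f m)) => h.
  exists m; first by rewrite inE mc orbT.
  by move=> y; rewrite inE => /orP[/eqP->|/H].
exists a; first by rewrite inE eqxx.
move=> y; rewrite inE => /orP[/eqP->//|/H yh]; exact: leq_trans yh (ltnW h).
Qed.

Lemma count_ord (m : nat) (P : pred nat) :
  #|[set w : 'I_m | P w]| = count P (iota 0 m).
Proof.
rewrite -sum1_card (eq_bigl (fun i : 'I_m => P i)); last by move=> i; rewrite inE.
by rewrite -(big_mkord P (fun _ => 1%N)) sum1_count /index_iota subn0.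
Qed.

Lemma child_count (L0 : seq nat) j :
  #|[set w : 'I_(size L0).+1 | (0 < w)%N && (nth 0 (0 :: L0) w == j)]| = count (pred1 j) L0.
Proof.
rewrite (count_ord _ (fun w => (0 < w)%N && (nth 0 (0::L0) w == j))) /=.
have -> : iota 1 (size L0) = [seq 1 + i | i <- iota 0 (size L0)] by rewrite -iotaDl.
rewrite add0n count_map.
rewrite -[in RHS](mkseq_nth 0 L0) /mkseq count_map; apply: eq_count => i /=.
by rewrite add0n.
Qed.

Section ParTree.
Variables (N0 : nat) (par : nat -> nat).
Hypothesis par_lt : forall j, (0 < j)%N -> (par j < j)%N.

Definition pe : rel 'I_N0.+1 := fun u v =>
  ((0 < v)%N && (nat_of_ord u == par v)) || ((0 < u)%N && (nat_of_ord v == par u)).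

Lemma pe_sym : symmetric pe.
Proof. by move=> u v; rewrite /pe orbC. Qed.

Lemma pe_irr : irreflexive pe.
Proof.
move=> u; rewrite /pe orbb; case: (ltnP 0 u) => //= u0.
by apply/eqP => h; have := par_lt u0; rewrite -h ltnn.
Qed.

Lemma par_ord (u : 'I_N0.+1) : (0 < u)%N -> (par u < N0.+1)%N.
Proof. by move=> u0; exact: ltn_trans (par_lt u0) (ltn_ord u). Qed.

Lemma pe_connect0 (u : 'I_N0.+1) : connect pe u ord0.
Proof.
have : forall m (u : 'I_N0.+1), (u < m)%N -> connect pe u ord0; last by apply; exact: ltnSn.
elim=> [//|m IH] {}u um.
case: (posnP u) => [u0|u0].
  by have -> : u = ord0 by apply: val_inj.
set p : 'I_N0.+1 := inord (par u).
have pv : nat_of_ord p = par u by rewrite /p inordK // par_ord.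
apply: connect_trans (connect1 _) (IH p _).
  by rewrite /pe pv u0 eqxx orbT.
rewrite pv; exact: leq_trans (par_lt u0) _.
Qed.

Lemma pe_tree : is_tree pe.
Proof.
split.
- by split; [exact: pe_sym | exact: pe_irr].
- by rewrite card_ord.
- move=> a b; apply: connect_trans (pe_connect0 a) _.
  by rewrite (sym_connect_sym pe_sym); exact: pe_connect0.
move=> c c3 uc; apply/negP => cyc.
have cn : c != [::] by apply/eqP => c0; move: c3; rewrite c0.
have [m mc mmax] := seq_max (fun y : 'I_N0.+1 => nat_of_ord y) cn.
have key : forall y, y \in c -> pe m y -> nat_of_ord y = par m.
  move=> y yc; rewrite /pe => /orP[/andP[y0 /eqP my]|/andP[_ /eqP //]].
  by have := mmax y yc; have := par_lt y0; rewrite -my /=; lia.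
case: (rot_to mc) => i c' hc.
have cyc' : cycle pe (m :: c') by rewrite -hc rot_cycle.
have uc' : uniq (m :: c') by rewrite -hc rot_uniq.
have sc' : size (m :: c') = size c by rewrite -hc size_rot.
have inc : forall y, y \in c' -> y \in c.
  by move=> y yc'; rewrite -(mem_rot i) hc inE yc' orbT.
case: c' hc cyc' uc' sc' inc => [|a [|t0 t1]] hc cyc' uc' sc' inc.
- by move: c3; rewrite -sc'.
- by move: c3; rewrite -sc'.
move: cyc'; rewrite /cycle /= rcons_path => /and4P[ma _ _ bm].
have bt : last t0 t1 \in t0 :: t1 by exact: mem_last.
have := key a (inc a (mem_head _ _)) ma.
have bm' : pe m (last t0 t1) by rewrite pe_sym.
have bt' : last t0 t1 \in [:: a, t0 & t1] by rewrite inE bt orbT.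
have := key _ (inc _ bt') bm'.
move=> h1 h2.
have ab : a = last t0 t1 by apply: ord_inj; rewrite h1 h2.
by move: uc' => /andP[_ /andP[]]; rewrite ab bt.
Qed.

Lemma pe_deg (v : 'I_N0.+1) :
  #|[set w | pe v w]| = (#|[set w : 'I_N0.+1 | (0 < w)%N && (par w == v)]| + (0 < v))%N.
Proof.
case: (posnP v) => [v0|v0].
  rewrite addn0; apply: eq_card => w; rewrite !inE /pe v0 /= orbF.
  by rewrite eq_sym.
set p : 'I_N0.+1 := inord (par v).
have pv : nat_of_ord p = par v by rewrite /p inordK // par_ord.
rewrite (cardsD1 p) inE addnC; congr (_ + _); last first.
  by rewrite /pe pv v0 eqxx orbT.
apply: eq_card => w; rewrite !inE; apply/idP/idP.
  case/andP=> wp /orP[/andP[w0 /eqP vw]| /andP[_ /eqP wv]].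
    by rewrite w0 -vw eqxx.
  have wpe : w = p by apply: ord_inj; rewrite pv.
  by rewrite wpe eqxx in wp.
case/andP=> w0 /eqP wv; rewrite /pe w0 wv eqxx /= andbT.
apply/eqP => wp; have := par_lt w0; have := par_lt v0.
by rewrite wv -pv -wp; lia.
Qed.

End ParTree.

Lemma card_split (T : finType) (P Q : pred T) :
  (#|[set w | P w && Q w]| + #|[set w | P w && ~~ Q w]| = #|[set w | P w]|)%N.
Proof.
rewrite -(cardsID [set w | Q w] [set w | P w]); congr (_ + _);
  by apply: eq_card => w; rewrite !inE; case: (P w); case: (Q w).
Qed.

Lemma sdegE (V : finType) (e : rel V) (s : {set V} -> bool) v :
  sdeg e s v = (#|[set w | e v w]|%:Z - 2 * #|[set w | e v w && ~~ s [set v; w]]|%:Z)%R.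
Proof.
rewrite /sdeg -(card_split (e v) (fun w => s [set v; w])).
rewrite PoszD; set a := Posz _; set b := Posz _.
rewrite mulr2n ?mulrDl ?mul1r; lia.
Qed.

Lemma set2_eq (T : finType) (a b v w : T) : a != b -> v != w ->
  ([set v; w] == [set a; b]) = ((v == a) && (w == b)) || ((v == b) && (w == a)).
Proof.
move=> ab vw; apply/eqP/idP.
  move=> E.
  have va : v \in [set a; b] by rewrite -E set21.
  have wa : w \in [set a; b] by rewrite -E set22.
  move: va wa; rewrite !inE.
  case/orP=> /eqP vE; case/orP=> /eqP wE; subst v w; rewrite ?eqxx ?orbT //.
  - by rewrite eqxx in vw.
  - by rewrite eqxx in vw.
case/orP=> /andP[/eqP-> /eqP->] //.
by rewrite setUC.
Qed.

Lemma sum_shift (n : nat) (f : 'I_n -> nat) : (1 <= n)%N -> (forall k, 2 <= f k)%N ->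
  (\sum_(k < n) (f k - 1 - (k.+1 < n)) + n.-1 = \sum_(k < n) (f k - 1))%N.
Proof.
case: n f => // n f _ f2.
rewrite !big_ord_recr /= ltnn subn0.
have -> : (\sum_(i < n) (f (widen_ord (leqnSn n) i) - 1 - (i.+1 < n.+1)) =
   \sum_(i < n) (f (widen_ord (leqnSn n) i) - 2))%N.
  by apply: eq_bigr => i _; rewrite ltnS ltn_ord; lia.
have -> : (\sum_(i < n) (f (widen_ord (leqnSn n) i) - 1) =
   \sum_(i < n) (f (widen_ord (leqnSn n) i) - 2) + \sum_(i < n) 1)%N.
  rewrite -big_split /=; apply: eq_bigr => i _.
  by have := f2 (widen_ord (leqnSn n) i); lia.
by rewrite sum1_card card_ord; lia.
Qed.

Section Constr.
Variables (n : nat) (x : 'I_n -> int).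
Hypotheses (n1 : (1 <= n)%N) (xgt : forall i, (1 < x i)%R).

Definition xn (k : 'I_n) : nat := `|x k|%N.
Definition cc (k : 'I_n) : nat := xn k - 1 - (k.+1 < n).
Definition FF : seq nat := flatten [seq nseq (cc k) (k + 3) | k <- enum 'I_n].
Definition L0 := iota 0 (n + 2) ++ FF.
Definition par j := nth 0 (0 :: L0) j.
Definition N0 := size L0.
Definition E' := @pe N0 par.
Definition a1 : 'I_N0.+1 := inord 1.
Definition a2 : 'I_N0.+1 := inord 2.
Definition S' (E : {set 'I_N0.+1}) := E != [set a1; a2].

Lemma xnE k : x k = Posz (xn k).
Proof. have := xgt k; rewrite /xn; lia. Qed.

Lemma xn2 k : (2 <= xn k)%N.
Proof. have := xgt k; rewrite /xn; lia. Qed.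

Lemma FF_lt y : y \in FF -> (y < n + 3)%N.
Proof.
case/flattenP => s /mapP [k _ ->]; rewrite mem_nseq => /andP[_ /eqP->].
by have := ltn_ord k; lia.
Qed.

Lemma size_FF : size FF = (\sum_(k < n) cc k)%N.
Proof.
rewrite size_flatten /shape -map_comp sumnE big_map big_enum /=.
by apply: eq_bigr => k _; rewrite size_nseq.
Qed.

Lemma N0E : (N0 = n + 2 + \sum_(k < n) cc k)%N.
Proof. by rewrite /N0 /L0 size_cat size_iota size_FF. Qed.

Lemma N0_size : (N0.+1 = 4 + \sum_(k < n) (xn k - 1))%N.
Proof.
rewrite N0E -(sum_shift n1 xn2) /cc; lia.
Qed.

Lemma par_lt j : (0 < j)%N -> (par j < j)%N.
Proof.
case: j => // i _; rewrite /par /= /L0 nth_cat size_iota.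
case: (ltnP i (n + 2)) => hi; first by rewrite nth_iota.
case: (ltnP (i - (n + 2)) (size FF)) => h.
  have := FF_lt (mem_nth 0 h); set y := nth 0 FF _; lia.
by rewrite nth_default.
Qed.

Definition cntF j := (\sum_(k < n) ((k + 3 == j) * cc k))%N.

Lemma count_FF j : count (pred1 j) FF = cntF j.
Proof.
rewrite count_flatten -map_comp sumnE big_map big_enum /=.
by apply: eq_bigr => k _; rewrite count_nseq.
Qed.

Lemma cntF_out j : (j < 3)%N || (n + 3 <= j)%N -> cntF j = 0%N.
Proof.
move=> h; rewrite /cntF big1 // => k _.
have := ltn_ord k; case: eqP => // hk; lia.
Qed.

Lemma cntF_in (k : 'I_n) : cntF (k + 3) = cc k.
Proof.
rewrite /cntF (bigD1 k) //= eqxx mul1n big1 ?addn0 // => i ik.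
case: eqP => // /eqP; rewrite eqn_add2r => /eqP/ord_inj ik'.
by rewrite ik' eqxx in ik.
Qed.

Lemma count_L0 j : count (pred1 j) L0 = ((j < n + 2) + cntF j)%N.
Proof.
rewrite /L0 count_cat count_FF; congr (_ + _).
by rewrite count_uniq_mem ?iota_uniq // mem_iota.
Qed.

Lemma a1v : nat_of_ord a1 = 1%N.
Proof. by rewrite /a1 inordK // N0E; lia. Qed.
Lemma a2v : nat_of_ord a2 = 2%N.
Proof. by rewrite /a2 inordK // N0E; lia. Qed.

Lemma par1 : par 1 = 0%N.
Proof. by rewrite /par /= /L0 nth_cat size_iota; case: (ltnP _ (n + 2)) => h; [rewrite nth_iota|lia]. Qed.
Lemma par2 : par 2 = 1%N.
Proof. by rewrite /par /= /L0 nth_cat size_iota; case: (ltnP _ (n + 2)) => h; [rewrite nth_iota|lia]. Qed.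

Lemma E'a12 : E' a1 a2.
Proof. by rewrite /E' /pe a1v a2v par2. Qed.

Lemma a12 : a1 != a2.
Proof. by apply/eqP => /(congr1 (@nat_of_ord _)); rewrite a1v a2v. Qed.

Lemma degE v : #|[set w | E' v w]| = ((v < n + 2) + cntF v + (0 < v))%N.
Proof. by rewrite /E' pe_deg; [rewrite child_count count_L0 | exact: par_lt]. Qed.

Lemma negE v : #|[set w | E' v w && ~~ S' [set v; w]]| = ((v == a1) || (v == a2) : nat).
Proof.
have irr := pe_irr par_lt.
have eq1 : forall w, E' v w -> ~~ S' [set v; w] =
   ((v == a1) && (w == a2)) || ((v == a2) && (w == a1)).
  move=> w vw; rewrite /S' negbK set2_eq ?a12 //.
  by apply/eqP => vw'; rewrite vw' /E' irr in vw.
have -> : [set w | E' v w && ~~ S' [set v; w]] =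
   [set w | E' v w && (((v == a1) && (w == a2)) || ((v == a2) && (w == a1)))].
  apply/setP => w; rewrite !inE; case vw: (E' v w) => //=; by rewrite eq1.
case: (eqVneq v a1) => [->|va1] /=.
  rewrite (_ : [set w | _] = [set a2]) ?cards1 //.
  apply/setP => w; rewrite !inE (negbTE a12) andFb orbF; case: (eqVneq w a2) => [->|_]; by rewrite ?E'a12 ?andbF.
case: (eqVneq v a2) => [->|va2] /=.
  rewrite (_ : [set w | _] = [set a1]) ?cards1 //.
  apply/setP => w; rewrite !inE; case: (eqVneq w a1) => [->|_]; last by rewrite andbF.
  by rewrite andbT /E' pe_sym; exact: E'a12.
by rewrite (_ : [set w | _] = set0) ?cards0 //; apply/setP => w; rewrite !inE andbF.
Qed.

Lemma sdegC v : sdeg E' S' v =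
  (((v < n + 2) + cntF v + (0 < v))%N%:Z - 2 * ((v == a1) || (v == a2) : nat)%:Z)%R.
Proof. by rewrite sdegE degE negE. Qed.

Lemma E'_tree : is_tree E'.
Proof. exact: pe_tree par_lt. Qed.

Lemma eq_a1 (v : 'I_N0.+1) : (v == a1) = (nat_of_ord v == 1%N).
Proof. by apply/eqP/eqP => [->|h]; [exact: a1v | apply: ord_inj; rewrite h a1v]. Qed.
Lemma eq_a2 (v : 'I_N0.+1) : (v == a2) = (nat_of_ord v == 2%N).
Proof. by apply/eqP/eqP => [->|h]; [exact: a2v | apply: ord_inj; rewrite h a2v]. Qed.

Lemma realC : realizes E' S' (fun d : int => d = 1%R \/ d = 0%R \/ exists i : 'I_n, d = x i).
Proof.
move=> d; split.
  case => [->|[->|[i ->]]].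
  - exists ord0; rewrite sdegC eq_a1 eq_a2 /= cntF_out //.
    by rewrite addn0 (_ : (0 < n + 2)%N = true) //; lia.
  - exists a1; rewrite sdegC eq_a1 eq_a2 a1v /= cntF_out //.
    by rewrite (_ : (1 < n + 2)%N = true) //; lia.
  - have hi : (i + 3 < N0.+1)%N by rewrite N0E; have := ltn_ord i; lia.
    exists (inord (i + 3)); rewrite sdegC eq_a1 eq_a2 inordK // cntF_in.
    have -> : ((i + 3 == 1) || (i + 3 == 2))%N = false by lia.
    rewrite xnE /cc; have := xn2 i; have := ltn_ord i.
    rewrite (_ : (i + 3 < n + 2)%N = (i.+1 < n)%N); last by apply/idP/idP; lia.
    rewrite (_ : (0 < i + 3)%N = true); last by rewrite addn3.
    by case: (i.+1 < n)%N => /=; lia.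
case=> v <-; rewrite sdegC eq_a1 eq_a2.
move: (ltn_ord v); set j := nat_of_ord v => jlt.
case: (ltnP j 3) => j3.
  rewrite cntF_out ?j3 // addn0.
  case: j j3 jlt => [|[|[|//]]] _ _ /=.
  - by left; rewrite (_ : (0 < n + 2)%N = true) //; lia.
  - by right; left; rewrite (_ : (1 < n + 2)%N = true) //; lia.
  - by right; left; rewrite (_ : (2 < n + 2)%N = true) //; lia.
case: (ltnP j (n + 3)) => jn.
  have hk : (j - 3 < n)%N by lia.
  have [k jk] : exists k : 'I_n, j = (k + 3)%N by exists (Ordinal hk); rewrite /= subnK.
  right; right; exists k.
  rewrite jk cntF_in xnE /cc; have := xn2 k; have := ltn_ord k.
  have -> : ((k + 3 == 1) || (k + 3 == 2))%N = false by lia.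
  rewrite (_ : (k + 3 < n + 2)%N = (k.+1 < n)%N); last by apply/idP/idP; lia.
  rewrite (_ : (0 < k + 3)%N = true); last by rewrite addn3.
  by case: (k.+1 < n)%N => /=; lia.
left; rewrite cntF_out ?jn ?orbT // addn0.
have -> : ((j == 1) || (j == 2))%N = false by lia.
have -> : (j < n + 2)%N = false by lia.
have -> : (0 < j)%N = true by lia.
by [].
Qed.

End Constr.

Lemma conn_nbr (V : finType) (e : rel V) v u : connect e v u -> v != u -> exists w, e v w.
Proof.
case/connectP => p pth ->; case: p pth => [|w p] /=; first by rewrite eqxx.
by case/andP => h _ _; exists w.
Qed.

Theorem mainTheorem10 (n : nat) (x : 'I_n -> int)
  (V : finType) (e : rel V) (s : {set V} -> bool) :
  (1 <= n)%N ->
  injective x ->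
  (forall i, (1 < x i)%R) ->
  optimal_realization e s
    (fun d : int => d = 1%R \/ d = 0%R \/ exists i : 'I_n, d = x i) ->
  #|neg_edges e s| = 1%N.
Proof.
move=> n1 xinj xgt [[[esym eirr] Vpos conn acyc] real opt].
have hN : (#|V| <= 4 + \sum_(k < n) (xn x k - 1))%N.
  rewrite -(N0_size n1 xgt) -[X in (_ <= X)%N](card_ord (N0 x).+1).
  exact: opt _ _ _ (E'_tree x n1) (realC n1 xgt).
pose deg v := #|[set w | e v w]|.
pose q v := #|[set w | e v w && ~~ s [set v; w]]|.
have sdegD : forall v, sdeg e s v = 1%R \/ sdeg e s v = 0%R \/ exists i, sdeg e s v = x i.
  by move=> v; apply/(real _).2; exists v.
have [z z0] : exists z, sdeg e s z = 0%R by apply/(real _).1; right; left.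
have [o o1] : exists o, sdeg e s o = 1%R by apply/(real _).1; left.
have zo : z != o by apply/eqP => zo; move: z0; rewrite zo o1.
have deg1 : forall v, (1 <= deg v)%N.
  move=> v; pose u := if v == z then o else z.
  have vu : v != u by rewrite /u; case: (eqVneq v z) => [->|//]; exact: zo.
  have [w vw] := conn_nbr (conn v u) vu.
  by rewrite card_gt0; apply/set0Pn; exists w; rewrite inE.
have vineq : forall v, (1 + q v + (`|sdeg e s v|%N - 1) <= deg v)%N.
  move=> v; have := sdegE e s v; rewrite -/(deg v) -/(q v).
  have := deg1 v.
  have : (0 <= sdeg e s v)%R.
    by case: (sdegD v) => [->|[->|[i ->]]] //; have := xgt i; lia.
  set sd := sdeg e s v; set dv := deg v; set qv := q v; lia.
have hsum : (\sum_v deg v + 2 <= 2 * #|V|)%N.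
  have T0 : [set: V] != set0 by apply/set0Pn; exists z.
  have := deg_sum esym eirr acyc T0; rewrite cardsT.
  rewrite (eq_bigl (fun v => true)); last by move=> v; rewrite inE.
  congr (_ + _ <= _)%N; apply: eq_bigr => v _; rewrite /deg.
  by apply: eq_card => w; rewrite !inE.
pose f i := odflt z [pick v | sdeg e s v == x i].
have fP : forall i, sdeg e s (f i) = x i.
  move=> i; rewrite /f; case: pickP => [v /eqP //|none].
  have [v hv] : exists v, sdeg e s v = x i by apply/(real _).1; right; right; exists i.
  by have := none v; rewrite hv eqxx.
have finj : injective f.
  by move=> i j fij; apply: xinj; rewrite -!fP fij.
pose g v := (`|sdeg e s v|%N - 1)%N.
have hg : (\sum_(k < n) (xn x k - 1) <= \sum_v g v)%N.
  rewrite (bigID [pred v | v \in [set f i | i in 'I_n]]) /=.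
  apply: leq_trans (leq_addr _ _).
  rewrite (eq_bigl (fun v => v \in [set f i | i in 'I_n])) //.
  rewrite big_imset /=; last by move=> i j _ _; exact: finj.
  by apply: eq_leq; apply: eq_bigr => i _; rewrite /g fP.
have hsum2 : (#|V| + \sum_v q v + \sum_v g v <= \sum_v deg v)%N.
  rewrite -sum1_card -!big_split /=; apply: leq_sum => v _; exact: vineq.
have Qle2 : (\sum_v q v <= 2)%N.
  move: hN hsum hg hsum2.
  move: (\sum_(k < n) (xn x k - 1))%N (\sum_v deg v)%N (\sum_v q v)%N (\sum_v g v)%N #|V|.
  clear; move=> a b c d m; lia.
have qz : (1 <= q z)%N.
  have := sdegE e s z; rewrite -/(deg z) -/(q z) z0; have := deg1 z.
  move: (deg z) (q z) => a b; clear; lia.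
have memN : forall a b, e a b -> ~~ s [set a; b] -> [set a; b] \in neg_edges e s.
  move=> a b ab sab; rewrite inE; apply/existsP; exists a; apply/existsP; exists b.
  by rewrite ab eqxx sab.
have inv : forall E, E \in neg_edges e s -> exists a b, [/\ e a b, E = [set a; b] & ~~ s E].
  by move=> E; rewrite inE => /existsP[a /existsP[b /and3P[ab /eqP-> sab]]]; exists a, b.
have qpos : forall a b, e a b -> ~~ s [set a; b] -> (1 <= q a)%N.
  by move=> a b ab sab; rewrite card_gt0; apply/set0Pn; exists b; rewrite inE ab sab.
have qpos' : forall a b, e a b -> ~~ s [set a; b] -> (1 <= q b)%N.
  move=> a b ab sab; apply: (qpos b a); first by rewrite esym.
  by rewrite setUC.
have [w] : exists w, e z w && ~~ s [set z; w].
  by move: qz; rewrite card_gt0 => /set0Pn [w]; rewrite inE; exists w.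
case/andP => zw szw.
have uniqE : forall E, E \in neg_edges e s -> E = [set z; w].
  move=> E /inv [c [d [cd -> scd]]].
  apply/eqP; apply/negPn/negP => ne.
  have zw' : z != w by apply/eqP => h; rewrite h eirr in zw.
  have cd' : c != d by apply/eqP => h; rewrite h eirr in cd.
  have key : c \in [set z; w] -> d \in [set z; w] -> False.
    move: ne; rewrite set2_eq // !inE => H /orP[/eqP ec|/eqP ec] /orP[/eqP ed|/eqP ed];
      subst; by rewrite ?eqxx ?orbT ?andbT in H cd'.
  have [y [qy yz yw]] : exists y, [/\ (1 <= q y)%N, y != z & y != w].
    case: (boolP (c \in [set z; w])) => hc.
      exists d; split; first exact: (qpos' c d).
        by apply/eqP => h; apply: key hc _; rewrite h set21.
      by apply/eqP => h; apply: key hc _; rewrite h set22.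
    by exists c; split; [exact: (qpos c d) | apply: contra hc => /eqP->; rewrite set21 |
       apply: contra hc => /eqP->; rewrite set22].
  have qw : (1 <= q w)%N by exact: (qpos' z w).
  move: Qle2; rewrite (bigD1 z) // (bigD1 w) /=; last by rewrite eq_sym.
  rewrite (bigD1 y) /=; last by rewrite yz yw.
  move: qz qw qy; move: (q z) (q w) (q y) (\sum_(i | _) q i)%N; clear; move=> a b c d; lia.
have -> : neg_edges e s = [set [set z; w]].
  apply/setP => E; rewrite in_set1; apply/idP/eqP => [/uniqE //|->]; exact: memN.
by rewrite cards1.
Qed.
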